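(* Let $a>0$. There exists $k_0=k_0(a)$ such that for all integers $k\ge k_0$, all positive integers $N>e^{ak}$, all $\delta\in(0,1/2)$ and all $x\in[e^{ak^2},N^k]$, \[ \#\mathcal{S}_k(N,\delta,x)\ge\Big(\big(\tfrac12-\delta\big)\big(2^{-1/k}-\tfrac32e^{-a}\big)-(2/3)^k\Big)x^{1/k}. \]
   Context: For $y\in\mathbb{R}$, $\|y\|$ denotes the distance from $y$ to the nearest integer. For positive integers $k,N$ and real $\delta,x\ge0$, $\mathcal{S}_k(N,\delta,x):=\{n\in\{1,\dots,N\} : \|x/n^k\|\ge\delta\}$. *)

(* Defs.v *)
From Stdlib Require Import Reals List.
Import ListNotations.
Open Scope R_scope.

Definition frac_part (y : R) : R := y - IZR (Int_part y).

Definition dist_int (y : R) : R := Rmin (frac_part y) (1 - frac_part y).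

Definition S_set (k N : nat) (delta x : R) : list nat :=
  filter (fun n => if Rle_dec delta (dist_int (x / (INR n ^ k))) then true else false)
         (seq 1 N).

Definition S_card (k N : nat) (delta x : R) : nat := length (S_set k N delta x).

(* Main.v *)
Require Import Defs.
From Stdlib Require Import Reals Lra Lia List ZArith.
Import ListNotations.
Open Scope R_scope.

Lemma exp_le' : forall u v, u <= v -> exp u <= exp v.
Proof. intros u v H. destruct (Req_dec u v). subst; lra. left; apply exp_increasing; lra. Qed.

Lemma ln_le' : forall u v, 0 < u -> u <= v -> ln u <= ln v.
Proof. intros u v Hu H. destruct (Req_dec u v). subst; lra. left; apply ln_increasing; lra. Qed.

Lemma Rpower_neg_decr : forall u v s, 0 < u -> u <= v -> 0 <= s ->
  Rpower v (- s) <= Rpower u (- s).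
Proof.
  intros u v s Hu Huv Hs. unfold Rpower. apply exp_le'.
  assert (ln u <= ln v) by (apply ln_le'; lra). nra.
Qed.

Lemma Rpower_neg_le1 : forall v s, 1 <= v -> 0 <= s -> Rpower v (- s) <= 1.
Proof.
  intros v s Hv Hs. unfold Rpower. rewrite <- exp_0. apply exp_le'.
  assert (ln 1 <= ln v) by (apply ln_le'; lra). rewrite ln_1 in H. nra.
Qed.

Lemma Rpower_pos' : forall v s, 0 < Rpower v s.
Proof. intros; unfold Rpower; apply exp_pos. Qed.

(* convexity *)
Lemma convex_step : forall r v d, 0 < r -> 1 <= v -> 0 < d < 1/2 ->
  Rpower (v + d) (- r) - Rpower (v + 1 - d) (- r) >=
  (1 - 2 * d) * (Rpower (v + 1) (- r) - Rpower (v + 2) (- r)).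
Proof.
  intros r v d Hr Hv Hd.
  set (h := fun t => Rpower t (- r)).
  set (h' := fun t => - r * Rpower t (- r - 1)).
  assert (Hder : forall c, 0 < c -> derivable_pt_lim h c (h' c)).
  { intros c Hc. unfold h, h'. apply derivable_pt_lim_power; lra. }
  destruct (MVT_cor2 h h' (v + d) (v + 1 - d)) as [xi [E1 B1]]; [lra| intros; apply Hder; lra |].
  destruct (MVT_cor2 h h' (v + 1) (v + 2)) as [eta [E2 B2]]; [lra| intros; apply Hder; lra |].
  unfold h, h' in *.
  assert (Rpower eta (- (r + 1)) <= Rpower xi (- (r + 1))) by (apply Rpower_neg_decr; lra).
  replace (- r - 1) with (- (r + 1)) in * by ring.
  assert (0 <= Rpower eta (- (r + 1))) by (left; apply Rpower_pos').
  apply Rle_ge.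
  replace (Rpower (v + d) (- r) - Rpower (v + 1 - d) (- r)) with
    (- (Rpower (v + 1 - d) (- r) - Rpower (v + d) (- r))) by ring.
  replace (Rpower (v + 1) (- r) - Rpower (v + 2) (- r)) with
    (- (Rpower (v + 2) (- r) - Rpower (v + 1) (- r))) by ring.
  rewrite E1, E2. assert (0 < r * (1 - 2 * d)) by nra.
  replace (v + 1 - d - (v + d)) with (1 - 2 * d) by ring. replace (v + 2 - (v + 1)) with 1 by ring. nra.
Qed.

Lemma nat_between : forall z, 0 <= z -> exists L : nat, z - 1 < INR L <= z.
Proof.
  intros z Hz. destruct (archimed z) as [A B].
  assert (Hu : (0 < up z)%Z). { apply lt_IZR. lra. }
  exists (Z.to_nat (up z - 1)).
  rewrite INR_IZR_INZ, Z2Nat.id by lia. rewrite minus_IZR. simpl. lra.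
Qed.

Lemma nat_above : forall z, 0 <= z -> exists a : nat, z < INR a <= z + 1 /\ (1 <= a)%nat.
Proof.
  intros z Hz. destruct (archimed z) as [A B].
  assert (Hu : (0 < up z)%Z). { apply lt_IZR. lra. }
  exists (Z.to_nat (up z)).
  rewrite INR_IZR_INZ, Z2Nat.id by lia. split. lra. lia.
Qed.

Lemma count_nat : forall (Q : nat -> bool) a b N, (1 <= a)%nat ->
  (forall n, (a <= n <= b)%nat -> Q n = true) ->
  (Nat.min N b + 1 - a <= length (filter Q (seq 1 N)))%nat.
Proof.
  intros Q a b N Ha HQ. induction N.
  - cbn [seq filter length]. lia.
  - rewrite seq_S, filter_app, length_app. cbn [filter length].
    destruct (Nat.le_gt_cases a (S N)); destruct (Nat.le_gt_cases (S N) b).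
    + rewrite HQ by lia. cbn [length]. lia.
    + destruct (Q (S N)); cbn [length]; lia.
    + destruct (Q (S N)); cbn [length]; lia.
    + destruct (Q (S N)); cbn [length]; lia.
Qed.

Lemma INR_minus_ge : forall m n, INR m - INR n <= INR (m - n).
Proof.
  intros m n. destruct (Nat.le_gt_cases n m).
  rewrite minus_INR by lia. lra.
  replace (m - n)%nat with 0%nat by lia. apply lt_INR in H. simpl. lra.
Qed.

Lemma count_real : forall (Q : nat -> bool) p q N, 0 <= p -> q <= INR N ->
  (forall n : nat, p <= INR n <= q -> Q n = true) ->
  q - p - 1 <= INR (length (filter Q (seq 1 N))).
Proof.
  intros Q p q N Hp HqN HQ.
  destruct (Rle_or_lt 0 q) as [Hq|Hq].
  2:{ pose proof (pos_INR (length (filter Q (seq 1 N)))). lra. }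
  destruct (nat_above p Hp) as [a [Ha Ha1]].
  destruct (nat_between q Hq) as [b Hb].
  assert (HbN : (b <= N)%nat) by (apply INR_le; lra).
  assert (H := count_nat Q a b N Ha1).
  assert (H' : (Nat.min N b + 1 - a <= length (filter Q (seq 1 N)))%nat).
  { apply H. intros n Hn. apply HQ. destruct Hn as [H1 H2].
    apply le_INR in H1, H2. lra. }
  replace (Nat.min N b) with b in H' by lia.
  apply le_INR in H'. pose proof (INR_minus_ge (b + 1) a).
  rewrite plus_INR in H0. simpl in H0. lra.
Qed.

Fixpoint sumN (L : nat) (f : nat -> nat) : nat :=
  match L with O => O | S L' => (sumN L' f + f L')%nat end.

Lemma sumN_add : forall L f g, sumN L (fun j => f j + g j)%nat = (sumN L f + sumN L g)%nat.
Proof. induction L; intros; simpl; [reflexivity| rewrite IHL; lia]. Qed.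

Lemma sumN_0 : forall L, sumN L (fun _ => 0%nat) = 0%nat.
Proof. induction L; simpl; [reflexivity| rewrite IHL; lia]. Qed.

Lemma ind_bound : forall (Q : nat -> nat -> bool) (P : nat -> bool) (key : nat -> nat) n L,
  (forall j, Q j n = true -> key n = j /\ P n = true) ->
  (sumN L (fun j => if Q j n then 1 else 0) <= if andb (Nat.ltb (key n) L) (P n) then 1 else 0)%nat.
Proof.
  intros Q P key n L H. induction L; simpl.
  - destruct (P n); simpl; lia.
  - destruct (Q L n) eqn:E.
    + destruct (H L E) as [K HP]. rewrite K, HP in *.
      rewrite Nat.ltb_irrefl in IHL. simpl in IHL.
      replace (Nat.ltb L (S L)) with true by (symmetry; apply Nat.ltb_lt; lia). simpl. lia.
    + destruct (Nat.ltb (key n) L) eqn:E1; destruct (Nat.ltb (key n) (S L)) eqn:E2;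
      destruct (P n); simpl in *; try lia.
      apply Nat.ltb_lt in E1. apply Nat.ltb_ge in E2. lia.
Qed.

Lemma sum_filter_le : forall (Q : nat -> nat -> bool) (P : nat -> bool) (key : nat -> nat) l L,
  (forall j n, Q j n = true -> key n = j /\ P n = true) ->
  (sumN L (fun j => length (filter (Q j) l)) <= length (filter P l))%nat.
Proof.
  intros Q P key l L H. induction l as [|n l IH]; simpl.
  - rewrite sumN_0. lia.
  - assert (E : sumN L (fun j => length (if Q j n then n :: filter (Q j) l else filter (Q j) l))
       = sumN L (fun j => (if Q j n then 1 else 0) + length (filter (Q j) l))%nat).
    { clear. induction L; simpl; [reflexivity|]. rewrite IHL. destruct (Q L n); reflexivity. }
    rewrite E, sumN_add.
    pose proof (ind_bound Q P key n L (fun j => H j n)).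
    destruct (Nat.ltb (key n) L); destruct (P n); simpl in *; lia.
Qed.

Lemma le_div_helper : forall v P x, 0 < P -> v * P <= x -> v <= x / P.
Proof.
  intros v P x HP H. unfold Rdiv.
  assert (0 < / P) by (apply Rinv_0_lt_compat; lra).
  replace v with ((v * P) * / P) by (field; lra). apply Rmult_le_compat_r; lra.
Qed.

Lemma ge_div_helper : forall v P x, 0 < P -> x <= v * P -> x / P <= v.
Proof.
  intros v P x HP H. unfold Rdiv.
  assert (0 < / P) by (apply Rinv_0_lt_compat; lra).
  replace v with ((v * P) * / P) by (field; lra). apply Rmult_le_compat_r; lra.
Qed.

Lemma Rpower_exp : forall t s, Rpower (exp t) s = exp (s * t).
Proof. intros. unfold Rpower. rewrite ln_exp. reflexivity. Qed.

Lemma Rpower_k_inv : forall x k, 0 < x -> (1 <= k)%nat -> Rpower x (1 / INR k) ^ k = x.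
Proof.
  intros x k Hx Hk. assert (0 < INR k) by (apply lt_0_INR; lia).
  rewrite <- Rpower_pow by apply Rpower_pos'. rewrite Rpower_mult.
  replace (1 / INR k * INR k) with 1 by (field; lra). apply Rpower_1; auto.
Qed.

Lemma Rpower_neg_k : forall t k, 0 < t -> (1 <= k)%nat -> Rpower t (- (1 / INR k)) ^ k = / t.
Proof.
  intros t k Ht Hk. assert (0 < INR k) by (apply lt_0_INR; lia).
  rewrite <- Rpower_pow by apply Rpower_pos'. rewrite Rpower_mult.
  replace (- (1 / INR k) * INR k) with (- 1) by (field; lra).
  unfold Rpower. replace (-1 * ln t) with (- ln t) by ring.
  rewrite exp_Ropp, exp_ln; auto.
Qed.

Lemma int_part_facts : forall (j : nat) v d, 0 < d < 1/2 ->
  INR j + 2 + d <= v -> v <= INR j + 3 - d ->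
  (Z.to_nat (up v) - 3)%nat = j /\ d <= dist_int v.
Proof.
  intros j v d Hd H1 H2.
  assert (Hu : Z.of_nat (j + 3) = up v).
  { apply tech_up; rewrite <- INR_IZR_INZ, plus_INR; simpl; lra. }
  split.
  - rewrite <- Hu, Nat2Z.id. lia.
  - unfold dist_int, Defs.frac_part, Int_part. rewrite <- Hu.
    rewrite minus_IZR, <- INR_IZR_INZ, plus_INR. simpl.
    apply Rmin_glb; lra.
Qed.

Lemma sumN_bound : forall (f : nat -> nat) (g : R -> R) d,
  0 < d < 1/2 ->
  (forall j : nat, g (INR j + 2 + d) - g (INR j + 3 - d) - 1 <= INR (f j)) ->
  (forall j : nat, g (INR j + 2 + d) - g (INR j + 3 - d) >=
       (1 - 2 * d) * (g (INR j + 3) - g (INR j + 4))) ->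
  forall L, (1 - 2 * d) * (g 3 - g (INR L + 3)) - INR L <= INR (sumN L f).
Proof.
  intros f g d Hd Hf Hc. induction L.
  - simpl. replace (0 + 3) with 3 by ring. lra.
  - cbn [sumN]. rewrite plus_INR, S_INR.
    specialize (Hf L). specialize (Hc L).
    replace (INR L + 1 + 3) with (INR L + 4) by ring. lra.
Qed.

Theorem lemma3p6 (a : R) (ha : 0 < a) :
  exists k0 : nat, forall k : nat, (1 <= k)%nat -> (k0 <= k)%nat ->
    forall N : nat, (1 <= N)%nat -> exp (a * INR k) < INR N ->
    forall delta x : R, 0 < delta < 1/2 ->
      exp (a * INR k ^ 2) <= x -> x <= INR N ^ k ->
      INR (S_card k N delta x) >=
        ((1/2 - delta) * (Rpower 2 (- (1 / INR k)) - 3/2 * exp (- a))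
          - (2/3) ^ k) * Rpower x (1 / INR k).
Proof.
  assert (Hcpos : 0 < 3/2 * exp (- a)) by (pose proof (exp_pos (- a)); lra).
  destruct (Rlt_or_le (3/2 * exp (- a)) 1) as [Hc|Hc].
  2:{ exists 1%nat. intros k Hk1 _ N HN1 HN d x Hd Hx1 Hx2.
      assert (0 < INR k) by (apply lt_0_INR; lia).
      assert (0 <= 1 / INR k) by (unfold Rdiv; rewrite Rmult_1_l; left; apply Rinv_0_lt_compat; lra).
      pose proof (Rpower_neg_le1 2 (1 / INR k) ltac:(lra) H0).
      pose proof (Rpower_pos' x (1 / INR k)).
      assert (0 < (2/3) ^ k) by (apply pow_lt; lra).
      pose proof (pos_INR (S_card k N d x)).
      assert (((1/2 - d) * (Rpower 2 (- (1 / INR k)) - 3/2 * exp (- a)) - (2/3) ^ k) <= 0) by nra.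
      nra. }
  set (c := 3/2 * exp (- a)) in *.
  assert (H4 : 0 <= 4 / (1 - c)) by (unfold Rdiv; apply Rmult_le_pos; [lra| left; apply Rinv_0_lt_compat; lra]).
  destruct (nat_above _ H4) as [k0 [Hk0 _]].
  exists k0. intros k Hk1 Hkk0 N HN1 HN d x Hd Hx1 Hx2.
  assert (Hk : 0 < INR k) by (apply lt_0_INR; lia).
  set (r := 1 / INR k).
  assert (Hr : 0 < r) by (unfold r, Rdiv; rewrite Rmult_1_l; apply Rinv_0_lt_compat; lra).
  assert (Hkr : INR k * r = 1) by (unfold r; field; lra).
  assert (Hx : 0 < x) by (pose proof (exp_pos (a * INR k ^ 2)); lra).
  set (y := Rpower x r).
  assert (Hy : 0 < y) by apply Rpower_pos'.
  assert (Hyk : exp (a * INR k) <= y).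
  { unfold y. replace (exp (a * INR k)) with (Rpower (exp (a * INR k ^ 2)) r).
    apply Rle_Rpower_l; [lra| split; [apply exp_pos| lra]].
    rewrite Rpower_exp. f_equal. unfold r. field. lra. }
  assert (HNpos : 0 < INR N) by (apply lt_0_INR; lia).
  assert (HyN : y <= INR N).
  { unfold y. replace (INR N) with (Rpower (INR N ^ k) r).
    apply Rle_Rpower_l; [lra| split; lra].
    rewrite <- Rpower_pow by lra. rewrite Rpower_mult. rewrite Hkr. apply Rpower_1; lra. }
  set (g := fun t => y * Rpower t (- r)).
  assert (Hgk : forall t, 0 < t -> g t ^ k = x / t).
  { intros t Ht. unfold g. rewrite Rpow_mult_distr. unfold y, r.
    rewrite Rpower_k_inv, Rpower_neg_k by (auto; lia). reflexivity. }
  assert (Hgpos : forall t, 0 < g t) by (intros; unfold g; apply Rmult_lt_0_compat; auto; apply Rpower_pos').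
  assert (Hgle : forall t, 1 <= t -> g t <= y).
  { intros t Ht. unfold g. pose proof (Rpower_neg_le1 t r Ht ltac:(lra)). nra. }
  set (P := fun n : nat => if Rle_dec d (dist_int (x / (INR n ^ k))) then true else false).
  set (Q := fun (j n : nat) => if Rle_dec (INR j + 2 + d) (x / INR n ^ k) then
             if Rle_dec (x / INR n ^ k) (INR j + 3 - d) then true else false else false).
  set (key := fun n : nat => (Z.to_nat (up (x / INR n ^ k)) - 3)%nat).
  assert (HQP : forall j n, Q j n = true -> key n = j /\ P n = true).
  { intros j n. unfold Q, key, P.
    destruct (Rle_dec (INR j + 2 + d) (x / INR n ^ k)); [|discriminate].
    destruct (Rle_dec (x / INR n ^ k) (INR j + 3 - d)); [|discriminate].
    intros _. destruct (int_part_facts j _ d Hd r0 r1) as [E1 E2]. split; auto.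
    destruct (Rle_dec d (dist_int (x / INR n ^ k))); auto. }
  set (f := fun j => length (filter (Q j) (seq 1 N))).
  assert (Hf : forall j : nat, g (INR j + 2 + d) - g (INR j + 3 - d) - 1 <= INR (f j)).
  { intros j. pose proof (pos_INR j). unfold f. apply count_real.
    - left; apply Hgpos.
    - pose proof (Hgle (INR j + 2 + d) ltac:(lra)). lra.
    - intros n [Hn1 Hn2]. pose proof (Hgpos (INR j + 3 - d)).
      assert (Hnk1 : g (INR j + 3 - d) ^ k <= INR n ^ k) by (apply pow_incr; lra).
      assert (Hnk2 : INR n ^ k <= g (INR j + 2 + d) ^ k) by (apply pow_incr; lra).
      rewrite Hgk in Hnk1, Hnk2 by lra.
      assert (Hnp : 0 < INR n ^ k) by (apply pow_lt; lra).
      unfold Q.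
      destruct (Rle_dec (INR j + 2 + d) (x / INR n ^ k)) as [_|C].
      2:{ exfalso; apply C. apply le_div_helper; auto.
          apply (Rmult_le_compat_l (INR j + 2 + d)) in Hnk2; [|lra].
          replace ((INR j + 2 + d) * (x / (INR j + 2 + d))) with x in Hnk2 by (field; lra). lra. }
      destruct (Rle_dec (x / INR n ^ k) (INR j + 3 - d)) as [_|C]; auto.
      exfalso; apply C. apply ge_div_helper; auto.
      apply (Rmult_le_compat_l (INR j + 3 - d)) in Hnk1; [|lra].
      replace ((INR j + 3 - d) * (x / (INR j + 3 - d))) with x in Hnk1 by (field; lra). lra. }
  assert (Hcv : forall j : nat, g (INR j + 2 + d) - g (INR j + 3 - d) >=
       (1 - 2 * d) * (g (INR j + 3) - g (INR j + 4))).
  { intros j. pose proof (pos_INR j). unfold g.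
    pose proof (convex_step r (INR j + 2) d Hr ltac:(lra) Hd).
    replace (INR j + 2 + 1 - d) with (INR j + 3 - d) in H0 by ring.
    replace (INR j + 2 + 1) with (INR j + 3) in H0 by ring.
    replace (INR j + 2 + 2) with (INR j + 4) in H0 by ring. nra. }
  assert (Hz : 0 <= (2/3) ^ k * y) by (left; apply Rmult_lt_0_compat; auto; apply pow_lt; lra).
  destruct (nat_between _ Hz) as [L HL].
  pose proof (sumN_bound f g d Hd Hf Hcv L) as Hsum.
  assert (Hcard : (sumN L f <= S_card k N d x)%nat).
  { unfold S_card, S_set. apply (sum_filter_le Q P key). exact HQP. }
  apply le_INR in Hcard.
  set (w := (2/3) ^ k * exp (a * INR k)).
  assert (Hw : 0 < w) by (apply Rmult_lt_0_compat; [apply pow_lt; lra| apply exp_pos]).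
  assert (Hwc : Rpower w (- r) = c).
  { unfold w, Rpower. rewrite ln_mult by (try apply pow_lt; try apply exp_pos; lra).
    rewrite ln_pow, ln_exp by lra.
    replace (- r * (INR k * ln (2/3) + a * INR k)) with (- ln (2/3) + - a).
    2:{ replace (- r * (INR k * ln (2 / 3) + a * INR k)) with (- (INR k * r) * (ln (2/3) + a)) by ring.
        rewrite Hkr. ring. }
    rewrite exp_plus, exp_Ropp, exp_ln by lra. unfold c. field. }
  assert (HgL : g (INR L + 3) <= c * y).
  { unfold g. rewrite <- Hwc. rewrite Rmult_comm. apply Rmult_le_compat_r; [lra|].
    apply Rpower_neg_decr; [auto| |lra].
    assert (w <= (2/3) ^ k * y) by (unfold w; apply Rmult_le_compat_l; [left; apply pow_lt; lra| auto]).
    pose proof (pos_INR L). lra. }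
  assert (Hln3 : ln 3 < 2).
  { rewrite <- (ln_exp 2). apply ln_increasing; [lra|].
    pose proof (exp_ineq1 2 ltac:(lra)). lra. }
  assert (H3 : 1 - 2 * r <= Rpower 3 (- r)).
  { unfold Rpower. pose proof (exp_ineq1_le (- r * ln 3)).
    assert (0 < ln 3) by (rewrite <- ln_1; apply ln_increasing; lra). nra. }
  assert (H2 : Rpower 2 (- r) <= 1) by (apply Rpower_neg_le1; lra).
  assert (Hrc : 4 * r <= 1 - c).
  { assert (INR k0 <= INR k) by (apply le_INR; lia).
    assert (4 / (1 - c) < INR k) by lra.
    unfold r. apply (Rmult_le_reg_r (INR k * / (1 - c))).
    apply Rmult_lt_0_compat; [lra| apply Rinv_0_lt_compat; lra].
    replace (4 * (1 / INR k) * (INR k * / (1 - c))) with (4 / (1 - c)) by (field; lra).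
    replace ((1 - c) * (INR k * / (1 - c))) with (INR k) by (field; lra). lra. }
  fold r. fold y.
  assert (Hg3 : g 3 = y * Rpower 3 (- r)) by reflexivity.
  assert (HT : (1 - 2 * d) * (g 3 - g (INR L + 3)) >= ((1/2 - d) * (Rpower 2 (- r) - c)) * y).
  { rewrite Hg3. assert (0 < 1 - 2 * d) by lra.
    assert (H5 : Rpower 2 (- r) - c <= 2 * Rpower 3 (- r) - 2 * c) by lra.
    assert (HA : y * Rpower 3 (- r) - g (INR L + 3) >= (Rpower 3 (- r) - c) * y) by nra.
    assert (HB : 0 <= (1/2 - d) * y) by nra.
    pose proof (Rmult_le_compat_l _ _ _ HB H5).
    assert (HA' : (1 - 2 * d) * (y * Rpower 3 (- r) - g (INR L + 3)) >= (1 - 2 * d) * ((Rpower 3 (- r) - c) * y)).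
    { apply Rle_ge, Rmult_le_compat_l; lra. }
    nra. }
  nra.
Qed.
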